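(* Let $G$ be a network with three sources and three terminals containing no vertex of type $(3,3)$, $(2,3)$ or $(3,2)$. If $v$ is a vertex of type $(2,2)$, then for each terminal $t_j$ in the terminal color of $v$ there exists a directed path $P$ from a source to $t_j$ whose leaf of $t_j$ is a vertex of type $(2,2)$ with color equal to $\mathrm{col}(v)$. (E.g., if $\mathrm{col}(v)=(s_1,s_2,t_1,t_2)$, then both $t_1$ and $t_2$ have leaves of color $(s_1,s_2,t_1,t_2)$.)
   Context: A network is a finite directed acyclic graph $G=(V,E)$ with three sources $s_1,s_2,s_3$ (no incoming edges) and three terminals $t_1,t_2,t_3$ (no outgoing edges). For $v\in V$, $c_s(v)$ is the number of sources with a directed path to $v$ and $c_t(v)$ the number of terminals reachable from $v$ by a directed path (a vertex reaches itself, so e.g. each terminal has $c_t=1$); $(c_s(v),c_t(v))$ is the type of $v$. For a vertex $v$ of type $(2,2)$, its color $\mathrm{col}(v)$ is the tuple $(s_a,s_b,t_c,t_d)$ consisting of the two sources reaching $v$ and the two terminals reachable from $v$; $(s_a,s_b)$ is its source color and $(t_c,t_d)$ its terminal color. For a directed path $P$ from a source to a terminal $t_j$, the leaf of $t_j$ corresponding to $P$ is the last vertex $v_P$ on $P$ with $c_t(v_P)\ge 2$ (so every later vertex of $P$ has $c_t=1$); the leaves of $t_j$ are all such vertices. *)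

(* Defs.v *)
From mathcomp Require Import all_boot.
Set Implicit Arguments. Unset Strict Implicit. Unset Printing Implicit Defensive.

Record network (V : finType) (e : rel V) (s t : 'I_3 -> V) : Prop := Network {
  net_acyclic : forall x y, e x y -> ~~ connect e y x;
  net_src_noin : forall i x, ~~ e x (s i);
  net_term_noout : forall j y, ~~ e (t j) y;
  net_s_inj : injective s;
  net_t_inj : injective t;
  net_st_disj : forall i j, s i != t j
}.

Section Net.
Variables (V : finType) (e : rel V) (s t : 'I_3 -> V).

(* indices of sources reaching v, and of terminals reachable from v
   (connect is reflexive-transitive: a vertex reaches itself) *)
Definition srcs_of (v : V) : {set 'I_3} := [set i | connect e (s i) v].
Definition terms_of (v : V) : {set 'I_3} := [set j | connect e v (t j)].
Definition c_s (v : V) : nat := #|srcs_of v|.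
Definition c_t (v : V) : nat := #|terms_of v|.
Definition has_type (v : V) (a b : nat) : Prop := c_s v = a /\ c_t v = b.

Definition col (v : V) : {set 'I_3} * {set 'I_3} := (srcs_of v, terms_of v).

Definition is_st_path (i j : 'I_3) (p : seq V) : bool :=
  path e (s i) p && (last (s i) p == t j).

Definition leaf (i : 'I_3) (p : seq V) : option V :=
  let l := [seq x <- s i :: p | 2 <= c_t x] in
  if l is x :: l' then Some (last x l') else None.

End Net.

(* Main.v *)
Require Import Defs.
From mathcomp Require Import all_boot.

Lemma leaf_helper (T : Type) (l1 : seq T) (x : T) (l2 : seq T) :
  (if l1 ++ x :: l2 is y :: l' then Some (last y l') else None) = Some (last x l2).
Proof. by case: l1 => [|y l1] //=; rewrite last_cat. Qed.

Theorem mainTheorem9 (V : finType) (e : rel V) (s t : 'I_3 -> V) :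
  network e s t ->
  (forall x : V, ~ has_type e s t x 3 3 /\ ~ has_type e s t x 2 3
                 /\ ~ has_type e s t x 3 2) ->
  forall v : V, has_type e s t v 2 2 ->
  forall j : 'I_3, j \in terms_of e t v ->
  exists (i : 'I_3) (p : seq V) (w : V),
    [/\ is_st_path e s t i j p, leaf e s t i p = Some w,
        has_type e s t w 2 2 & col e s t w = col e s t v].
Proof.
move=> _ Hno v [Hs Ht] j Hj.
have : 0 < #|srcs_of e s v| by rewrite -/(c_s e s v) Hs.
case/card_gt0P => a Ha.
move: (Ha); rewrite inE => /connectP [p Hp Hv].
move: (Hj); rewrite inE => /connectP [q Hq Htj].
set P := fun x => 2 <= c_t e t x.
set w := last v [seq x <- q | P x].
have Pv : P v by rewrite /P Ht.
have Hw : (w == v) || ((w \in q) && P w).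
  have := mem_last v [seq x <- q | P x].
  by rewrite -/w inE mem_filter andbC.
have [Cvw Cwt Pw] : [/\ connect e v w, connect e w (t j) & P w].
  case/orP: Hw => [/eqP -> | /andP [wq Pw]].
    by split => //; apply/connectP; exists q.
  split => //.
    by apply: (path_connect Hq); rewrite inE wq orbT.
  move: Hq Htj; case/splitPr: wq => q1 q2.
  rewrite cat_path last_cat /= => /andP [_ /andP [_ H2]] ->.
  by apply/connectP; exists q2.
exists a, (p ++ q), w; split.
- by rewrite /is_st_path cat_path -Hv Hp Hq last_cat -Hv -Htj /=.
- rewrite /leaf -cat_cons lastI -Hv filter_cat filter_rcons.
  rewrite -/(c_t e t v) Ht /=.
  by rewrite -cats1 -catA cat1s leaf_helper.
- have Tsub : terms_of e t w \subset terms_of e t v.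
    apply/subsetP => k; rewrite !inE => Hk; exact: connect_trans Cvw Hk.
  have Ssub : srcs_of e s v \subset srcs_of e s w.
    apply/subsetP => k; rewrite !inE => Hk; exact: connect_trans Hk Cvw.
  have Tw : c_t e t w = 2.
    apply/eqP; rewrite eqn_leq [2 <= _]Pw andbT -Ht; exact: subset_leq_card.
  have Sw : c_s e s w = 2.
    have h1 : 2 <= c_s e s w by rewrite -Hs; exact: subset_leq_card.
    have h2 : c_s e s w <= 3 by by rewrite /c_s; apply: leq_trans (max_card _) _; rewrite card_ord.
    have h3 : c_s e s w != 3.
      by apply/eqP => h; case: (Hno w) => _ [_]; apply; split.
    move: h1 h2 h3; case: (c_s e s w) => [|[|[|[|n]]]] //.
  by split.
have Tsub : terms_of e t w \subset terms_of e t v.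
  apply/subsetP => k; rewrite !inE => Hk; exact: connect_trans Cvw Hk.
have Ssub : srcs_of e s v \subset srcs_of e s w.
  apply/subsetP => k; rewrite !inE => Hk; exact: connect_trans Hk Cvw.
rewrite /col; congr pair.
  apply/esym/eqP; rewrite eqEcard Ssub /=.
  have h2 : c_s e s w <= 3 by by rewrite /c_s; apply: leq_trans (max_card _) _; rewrite card_ord.
  have h3 : c_s e s w != 3.
    apply/eqP => h; case: (Hno w) => _ [_]; apply; split => //.
    apply/eqP; rewrite eqn_leq [2 <= _]Pw andbT -Ht; exact: subset_leq_card.
  rewrite -/(c_s e s w) -/(c_s e s v) Hs.
  by move: h2 h3; case: (c_s e s w) => [|[|[|[|n]]]].
apply/eqP; rewrite eqEcard Tsub /= -/(c_t e t w) -/(c_t e t v) Ht; exact: Pw.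
Qed.
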